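(* Let $\mathbf{X}$ be a finite tournament isomorphic to an induced subtournament of $\mathbf{S}(2)$. Then every extension of $\mathbf{X}$ in $\mathcal{P}_2$ embeds into every extension of $\mathbf{S}(2)$.
   Context: $\mathbf{S}(2)$ is the tournament whose vertices are the points of the unit circle of $\mathbb{C}$ with rational argument, with an arc from $x$ to $y$ iff $0<\arg(y/x)<\pi$. For a structure $\mathbf{A}=(A,<^{\mathbf{A}},P_1,P_2)$ with $<^{\mathbf{A}}$ a linear order on $A$ and $(P_1,P_2)$ a partition of $A$, writing $a\sim b$ when $a,b$ lie in the same part, $p(\mathbf{A})$ is the tournament on $A$ with an arc from $a$ to $b$ iff either ($a\sim b$ and $a<^{\mathbf{A}}b$) or ($a\not\sim b$ and $b<^{\mathbf{A}}a$). An extension of a tournament $\mathbf{X}$ is any such $\mathbf{A}$ with $p(\mathbf{A})=\mathbf{X}$; $\mathcal{P}_2$ is the class of finite such structures. In particular an extension of $\mathbf{S}(2)$ is a structure $(\mathbf{S}(2),<,B_1,B_2)$ with $p$ of it equal to $\mathbf{S}(2)$. An embedding is an order-preserving injection mapping $P_i$ into $B_i$ and the complement of $P_i$ into the complement of $B_i$. *)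

(* Defs.v *)
From Stdlib Require Import Reals QArith Qcanon Qreals.
From mathcomp Require Import all_boot.

Open Scope R_scope.

(** Vertices of S(2): points e^{i q} of the unit circle whose argument q
    (taken in [0, 2*PI)) is rational.  A point is identified with its
    argument; Qc gives canonical rationals, so distinct vertices are
    distinct points. *)
Definition S2vertex : Type := {q : Qc | 0 <= Q2R q < 2 * PI}.

Definition angle (x : S2vertex) : R := Q2R (proj1_sig x).

Definition arg_quot (x y : S2vertex) : R :=
  let d := angle y - angle x in
  if Rle_dec 0 d then d else d + 2 * PI.

Definition S2arc (x y : S2vertex) : Prop := 0 < arg_quot x y < PI.

Close Scope R_scope.

Definition is_tournament {V : Type} (arc : V -> V -> Prop) : Prop :=
  (forall x, ~ arc x x) /\
  (forall x y, x <> y -> arc x y \/ arc y x) /\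
  (forall x y, arc x y -> ~ arc y x).

Definition strict_linear_order {V : Type} (lt : V -> V -> Prop) : Prop :=
  (forall x, ~ lt x x) /\
  (forall x y z, lt x y -> lt y z -> lt x z) /\
  (forall x y, x <> y -> lt x y \/ lt y x).

(** The tournament p(A) for A = (V, lt, P1, P2), where the partition
    (P1, P2) is encoded by the predicate P1 : V -> bool
    (P1 = [x | P1 x], P2 = [x | ~~ P1 x]). *)
Definition p_arc {V : Type} (lt : V -> V -> Prop) (P1 : V -> bool)
  (a b : V) : Prop :=
  (P1 a = P1 b /\ lt a b) \/ (P1 a <> P1 b /\ lt b a).

Definition is_extension {V : Type} (arc : V -> V -> Prop)
  (lt : V -> V -> Prop) (P1 : V -> bool) : Prop :=
  strict_linear_order lt /\ (forall a b, arc a b <-> p_arc lt P1 a b).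

Definition embeds {U V : Type} (ltU : U -> U -> Prop) (P1U : U -> bool)
  (ltV : V -> V -> Prop) (P1V : V -> bool) : Prop :=
  exists f : U -> V,
    injective f /\
    (forall a b, ltU a b -> ltV (f a) (f b)) /\
    (forall a, P1V (f a) = P1U a).

(* Main.v *)
Require Import Defs.
From Stdlib Require Import Reals QArith Qcanon Qreals Lra ClassicalEpsilon Classical.
From mathcomp Require Import all_boot.
Local Open Scope R_scope.

Lemma Qdense lo hi : lo < hi -> exists q : Q, lo < Q2R q < hi.
Proof.
  intros H.
  destruct (archimed (/ (hi - lo))) as [A1 _].
  set (n := up (/ (hi - lo))) in *.
  assert (Hp : 0 < / (hi - lo)) by (apply Rinv_0_lt_compat; lra).
  assert (Hn : (0 < n)%Z) by (apply lt_0_IZR; lra).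
  assert (Hn1 : 1 < IZR n * (hi - lo)).
  { replace 1 with (/ (hi - lo) * (hi - lo)) by (field; lra).
    apply Rmult_lt_compat_r; lra. }
  destruct (archimed (lo * IZR n)) as [B1 B2].
  set (m := up (lo * IZR n)) in *.
  exists (m # Z.to_pos n).
  unfold Q2R; simpl. rewrite Z2Pos.id; last exact Hn.
  assert (Hn0 : 0 < IZR n) by (apply IZR_lt; exact Hn).
  split.
  - apply (Rmult_lt_reg_r (IZR n)); [lra|].
    rewrite Rmult_assoc Rinv_l; lra.
  - apply (Rmult_lt_reg_r (IZR n)); [lra|].
    rewrite Rmult_assoc Rinv_l; lra.
Qed.

Lemma Qcdense lo hi : lo < hi -> exists q : Qc, lo < Q2R q < hi.
Proof.
  intros H; destruct (Qdense lo hi H) as [q Hq].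
  exists (Q2Qc q). simpl. rewrite (Qeq_eqR _ _ (Qred_correct q)). exact Hq.
Qed.

Lemma angle_bd (x : S2vertex) : 0 <= angle x < 2 * PI.
Proof. exact (proj2_sig x). Qed.

Lemma pick_v a lo hi : 0 <= a < 2*PI -> 0 <= lo < hi -> hi <= 2*PI ->
  exists v : S2vertex, exists s, lo < s < hi /\
    (angle v - a = s \/ angle v - a = s - 2*PI).
Proof.
  intros Ha Hl Hh. have PI0 := PI_RGT_0.
  destruct (Rlt_dec (a + lo) (2*PI)) as [C|C].
  - destruct (Qcdense (a+lo) (Rmin (a+hi) (2*PI))) as [q Hq].
    { apply Rmin_case; lra. }
    have Hm1 := Rmin_l (a+hi) (2*PI). have Hm2 := Rmin_r (a+hi) (2*PI).
    have Hb : 0 <= Q2R q < 2*PI by lra.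
    exists (exist _ q Hb), (Q2R q - a). unfold angle; simpl. lra.
  - destruct (Qcdense (a+lo-2*PI) (a+hi-2*PI)) as [q Hq]; first lra.
    have Hb : 0 <= Q2R q < 2*PI by lra.
    exists (exist _ q Hb), (Q2R q - a + 2*PI). unfold angle; simpl. lra.
Qed.

Ltac crunch :=
  unfold S2arc, arg_quot in *; cbv zeta in *;
  repeat match goal with
  | |- context [Rle_dec ?a ?b] => destruct (Rle_dec a b)
  | H : context [Rle_dec ?a ?b] |- _ => destruct (Rle_dec a b)
  end; cbn [is_left] in *; lra.

Lemma GL4 x y : S2arc x y -> forall p q : bool, exists v,
  (if p then S2arc x v else S2arc v x) /\ (if q then S2arc y v else S2arc v y).
Proof.
  intros Hxy p q. have PI0 := PI_RGT_0.
  have Ha := angle_bd x. have Hc := angle_bd y.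
  set d := arg_quot x y.
  have Hd : (angle y - angle x = d \/ angle y - angle x = d - 2*PI) /\ 0 < d < PI.
  { unfold S2arc in Hxy; fold d in Hxy; split; last exact Hxy.
    unfold d, arg_quot; cbv zeta. destruct (Rle_dec 0 (angle y - angle x)); [left|right]; cbn [is_left]; lra. }
  clearbody d. clear Hxy. destruct Hd as [Hd1 Hd2].
  destruct p, q.
  - destruct (pick_v (angle x) d PI) as [v [s [Hs1 Hs2]]]; try lra.
    have Hv := angle_bd v. exists v; simpl; destruct Hd1, Hs2; split; crunch.
  - destruct (pick_v (angle x) 0 d) as [v [s [Hs1 Hs2]]]; try lra.
    have Hv := angle_bd v. exists v; simpl; destruct Hd1, Hs2; split; crunch.
  - destruct (pick_v (angle x) PI (PI+d)) as [v [s [Hs1 Hs2]]]; try lra.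
    have Hv := angle_bd v. exists v; simpl; destruct Hd1, Hs2; split; crunch.
  - destruct (pick_v (angle x) (PI+d) (2*PI)) as [v [s [Hs1 Hs2]]]; try lra.
    have Hv := angle_bd v. exists v; simpl; destruct Hd1, Hs2; split; crunch.
Qed.



Local Close Scope R_scope.

Section Ext.
Context {V : Type} {arc : V -> V -> Prop} {lt : V -> V -> Prop} {P : V -> bool}.
Hypothesis E : is_extension arc lt P.

Lemma ext_irr a : ~ lt a a.
Proof. by case: E => [[H _] _]. Qed.
Lemma ext_trans a b c : lt a b -> lt b c -> lt a c.
Proof. by case: E => [[_ [H _]] _]; apply: H. Qed.
Lemma ext_tot a b : a <> b -> lt a b \/ lt b a.
Proof. by case: E => [[_ [_ H]] _]; apply: H. Qed.

Lemma ext_lt a b : arc a b -> (P a = P b -> lt a b) /\ (P a <> P b -> lt b a).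
Proof.
  case: E => _ H /H [[H1 H2]|[H1 H2]]; split=> // H3; exfalso; by apply: H3.
Qed.

Lemma ext_arc_tot a b : a <> b -> arc a b \/ arc b a.
Proof.
  case: (E) => _ H Hab; case: (ext_tot _ _ Hab) => L.
  - case E1: (P a == P b).
    + left; apply/H; left; split => //; exact/eqP.
    + right; apply/H; right; split => // Hq; by rewrite Hq eqxx in E1.
  - case E1: (P a == P b).
    + right; apply/H; left; split => //; apply/eqP; by rewrite eq_sym.
    + left; apply/H; right; split => // Hq; by rewrite Hq eqxx in E1.
Qed.

End Ext.
Arguments ext_irr {V arc lt P} E {a}.
Arguments ext_trans {V arc lt P} E {a b c}.
Arguments ext_lt {V arc lt P} E {a b}.
Arguments ext_arc_tot {V arc lt P} E {a b}.
Arguments ext_tot {V arc lt P} E {a b}.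

Lemma dense_S ltS B1 : is_extension S2arc ltS B1 ->
  forall u w b, ltS u w -> exists v, ltS u v /\ ltS v w /\ B1 v = b.
Proof.
  move=> E u w b Huw.
  have Hne : u <> w by move=> Heq; subst; exact: (ext_irr E Huw).
  have G : forall p q : bool, exists v,
    (if p then S2arc u v else S2arc v u) /\ (if q then S2arc w v else S2arc v w).
  { move=> p q; case: (ext_arc_tot E Hne) => A.
    - exact: GL4 _ _ A p q.
    - case: (GL4 _ _ A q p) => v [H1 H2]; by exists v. }
  case: (G (b == B1 u) (~~ (b == B1 w))) => v [H1 H2].
  exists v.
  case Eu: (B1 u) H1; case Ew: (B1 w) H2; case Ev: (B1 v); case: b => /= H2 H1;
  case: (ext_lt E H1) => L1 L2; case: (ext_lt E H2) => L3 L4;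
  rewrite ?Eu ?Ev ?Ew in L1 L2 L3 L4;
  try specialize (L1 erefl); try specialize (L2 ltac:(discriminate));
  try specialize (L3 erefl); try specialize (L4 ltac:(discriminate));
  (split; [|split]) => //;
  try (exfalso; apply: (ext_irr E (a:=u)); apply: (ext_trans E Huw);
       apply: (ext_trans E (b:=v)); assumption).
Qed.

Definition asb (P : Prop) : bool :=
  if excluded_middle_informative P then true else false.
Lemma asbP (P : Prop) : asb P = true <-> P.
Proof. rewrite /asb; case: excluded_middle_informative => //. Qed.

Lemma Q2R_Q2Qc q : Q2R (Q2Qc q) = Q2R q.
Proof. exact: Qeq_eqR (Qred_correct q). Qed.

Theorem lemma5 (T : finType) (arcX : T -> T -> Prop) :
  is_tournament arcX ->
  (exists g : T -> S2vertex,
      injective g /\ (forall x y, arcX x y <-> S2arc (g x) (g y))) ->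
  forall (ltA : T -> T -> Prop) (P1A : T -> bool),
    is_extension arcX ltA P1A ->
  forall (ltS : S2vertex -> S2vertex -> Prop) (B1 : S2vertex -> bool),
    is_extension S2arc ltS B1 ->
  embeds ltA P1A ltS B1.
Proof.
  move=> _ _ ltA P1A EA ltS B1 ES.
  have PI0 := PI_RGT_0. have P21 := PI2_1.
  have h0 : Rle (IZR 0) (Q2R (Q2Qc (inject_Z 0))) /\ Rlt (Q2R (Q2Qc (inject_Z 0))) (Rmult (IZR 2) PI).
  { rewrite Q2R_Q2Qc; unfold Q2R; simpl; lra. }
  have h1 : Rle (IZR 0) (Q2R (Q2Qc (inject_Z 1))) /\ Rlt (Q2R (Q2Qc (inject_Z 1))) (Rmult (IZR 2) PI).
  { rewrite Q2R_Q2Qc; unfold Q2R; simpl; lra. }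
  have Hne : (exist _ _ h0 : S2vertex) <> exist _ _ h1.
  { move=> Heq. have := f_equal angle Heq.
    change (Q2R (Q2Qc (inject_Z 0)) = Q2R (Q2Qc (inject_Z 1)) -> False).
    rewrite !Q2R_Q2Qc.
    unfold Q2R; simpl; lra. }
  have [u0 [w0 Hu0]] : exists u w, ltS u w.
  { case: (ext_tot ES Hne) => H; by do 2 eexists; exact H. }
  pose Sub := {u | ltS u w0}.
  have nx : forall (s : Sub) (b : bool),
      {v : Sub | ltS (sval s) (sval v) /\ B1 (sval v) = b}.
  { move=> s b; apply: constructive_indefinite_description.
    case: (@dense_S _ _ ES _ _ b (svalP s)) => v [H1 [H2 H3]].
    by exists (exist _ v H2). }
  pose rank x := #|[set y | asb (ltA y x)]|.
  have rank_lt : forall a b, ltA a b -> (rank a < rank b)%N.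
  { move=> a b Hab; apply: proper_card; apply/properP; split.
    - apply/subsetP => y; rewrite !inE => /asbP H; apply/asbP.
      exact (ext_trans EA H Hab).
    - exists a; rewrite !inE; first by apply/asbP.
      apply/negP => /asbP; exact (ext_irr EA). }
  have rank_inj : forall a b, rank a = rank b -> a = b.
  { move=> a b Hr; apply: NNPP => Hab.
    case: (ext_tot EA Hab) => /rank_lt; rewrite Hr ltnn //. }
  pose L k := if [pick y | rank y == k] is Some y then P1A y else true.
  have L_rank : forall x, L (rank x) = P1A x.
  { move=> x; rewrite /L; case: pickP => [y /eqP Hy|H].
    - by rewrite (rank_inj _ _ Hy).
    - by have := H x; rewrite eqxx. }
  pose s0 : Sub := exist _ u0 Hu0.
  pose h := fix h (k : nat) : Sub :=
    match k with O => sval (nx s0 (L O)) | S k' => sval (nx (h k') (L (S k'))) end.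
  have h_lab : forall k, B1 (sval (h k)) = L k.
  { by case=> [|k]; [exact: (proj2 (svalP (nx s0 (L O))))
                   | exact: (proj2 (svalP (nx (h k) (L k.+1))))]. }
  have h_step : forall k, ltS (sval (h k)) (sval (h k.+1)).
  { move=> k; exact: (proj1 (svalP (nx (h k) (L k.+1)))). }
  have h_mono : forall k m, (k < m)%N -> ltS (sval (h k)) (sval (h m)).
  { move=> k; elim=> [//|m IH]; rewrite ltnS leq_eqVlt => /orP [/eqP ->|/IH H].
    - exact: h_step.
    - exact (ext_trans ES H (h_step m)). }
  exists (fun x => sval (h (rank x))); split; [|split].
  - move=> a b Hf; apply: NNPP => Hab.
    case: (ext_tot EA Hab) => /rank_lt /h_mono; rewrite Hf; exact (ext_irr ES).
  - by move=> a b /rank_lt /h_mono.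
  - by move=> a; rewrite h_lab L_rank.
Qed.
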